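(* For every positive integer $s$, $$\sum_{n\ge0}z^n\sum_{j=0}^{n+1}(-1)^{n+1-j}\binom{2n+1}{n+1-j}j^{2s}=\frac12\left(1+\sqrt{1+4z}\right)\left(1+p_s(z)\right)$$ as formal power series, where $p_s(z)$ is a polynomial in $z$ with integer coefficients, all of which are divisible by $3$, and $p_s(0)=0$.
   Context: $\sqrt{1+4z}$ denotes the formal power series square root with constant term $1$. *)

(* Defs.v *)
From HB Require Import structures.
From mathcomp Require Import all_boot all_order all_algebra.
Set Implicit Arguments. Unset Strict Implicit. Unset Printing Implicit Defensive.
Import Order.TTheory GRing.Theory Num.Theory.
Local Open Scope ring_scope.

(* A formal power series with rational coefficients: n |-> coefficient of z^n. *)
Definition fps := nat -> rat.

Definition fps_mul (a b : fps) : fps :=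
  fun n => \sum_(i < n.+1) a i * b (n - i)%N.

Definition fps_const (c : rat) : fps := fun n => if n is 0%N then c else 0.

Definition fps_add (a b : fps) : fps := fun n => a n + b n.

Definition one_plus_4z : fps :=
  fun n => if n is 0%N then 1 else if n is 1%N then 4 else 0.

Definition is_sqrt_1_4z (r : fps) : Prop :=
  r 0%N = 1 /\ forall n, fps_mul r r n = one_plus_4z n.

Definition fps_of_poly (p : {poly int}) : fps := fun n => (p`_n)%:~R.

Definition lhs_series (s : nat) : fps :=
  fun n => \sum_(j < n.+2)
     (-1) ^+ (n.+1 - j) * ('C(2 * n + 1, n.+1 - j))%:R * (j%:R) ^+ (2 * s).

(* Main.v *)
Require Import Defs.
From HB Require Import structures.
From mathcomp Require Import all_boot all_order all_algebra.
From mathcomp Require Import ring lra.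
From mathcomp Require Import zify.
Import Order.TTheory GRing.Theory Num.Theory.
Local Open Scope ring_scope.

Fixpoint ff (m : nat) (y : rat) : rat :=
  if m is m'.+1 then y * ff m' (y - 1) else 1.

Lemma ffS m y : ff m.+1 y = y * ff m (y - 1). Proof. by []. Qed.

Lemma ffSr m y : ff m.+1 y = ff m y * (y - m%:R).
Proof.
elim: m y => [|m IH] y; first by rewrite /= subr0 !mulr1 mul1r.
rewrite ffS IH ffS -mulrA; congr (_ * (_ * _)).
rewrite -natr1; ring.
Qed.

Lemma ff_pascal m y : ff m.+1 (y + 1) - ff m.+1 y = m.+1%:R * ff m y.
Proof.
elim: m y => [|m IH] y; first by rewrite /= !mulr1; ring.
rewrite ffS addrK (ffS m.+1 y).
have H := IH (y - 1); rewrite subrK in H.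
have -> : ff m.+1 (y - 1) = ff m.+1 y - m.+1%:R * ff m (y - 1) by rewrite -H; ring.
rewrite -(natr1 (R:=rat) m.+1) (ffS m y); ring.
Qed.

Lemma ff_zero m i : (i < m)%N -> ff m i%:R = 0.
Proof.
elim: m i => [|m IH] [|i] //= H; first by rewrite mul0r.
by rewrite -natr1 addrK IH // mulr0.
Qed.

Definition pi (k : nat) (x : rat) : rat :=
  (ff (k.*2.+2) (x + k.+1%:R) + ff (k.*2.+2) (x + k%:R)) / (k.*2.+2)`!%:R.

Lemma pi0 x : pi 0 x = x ^+ 2.
Proof. rewrite /pi /= addr0 addrK !mulr1 (_ : 2`!%:R = 2) //; by field. Qed.

Lemma ff_d2 M y :
  ff M.+2 (y + 1) - 2 * ff M.+2 y + ff M.+2 (y - 1) = M.+2%:R * M.+1%:R * ff M (y - 1).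
Proof.
have H1 := ff_pascal M.+1 y.
have H2 := ff_pascal M.+1 (y - 1); rewrite subrK in H2.
have H3 := ff_pascal M (y - 1); rewrite subrK in H3.
have -> : ff M.+2 (y + 1) - 2 * ff M.+2 y + ff M.+2 (y - 1) =
  (ff M.+2 (y + 1) - ff M.+2 y) - (ff M.+2 y - ff M.+2 (y - 1)) by ring.
rewrite H1 H2 -mulrBr H3; ring.
Qed.

Lemma natS' (k : nat) : k.+1%:R = k%:R + 1 :> rat.
Proof. by rewrite natr1. Qed.

Lemma pi_d2 k x : pi k.+1 (x + 1) - 2 * pi k.+1 x + pi k.+1 (x - 1) = pi k x.
Proof.
rewrite /pi doubleS.
set y := x + k.+2%:R.
have e1 : x + 1 + k.+2%:R = y + 1 by rewrite /y; ring.
have e2 : x - 1 + k.+2%:R = y - 1 by rewrite /y; ring.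
have e3 : x + k.+1%:R = y - 1 by rewrite /y (natS' k.+1); ring.
have e4 : x + 1 + k.+1%:R = (y - 1) + 1 by rewrite /y (natS' k.+1); ring.
have e5 : x - 1 + k.+1%:R = (y - 1) - 1 by rewrite /y (natS' k.+1); ring.
have e6 : x + k%:R = y - 1 - 1 by rewrite /y (natS' k.+1) (natS' k); ring.
rewrite e1 e2 e3 e4 e5 e6.
have A := ff_d2 (k.*2.+2) y.
have B := ff_d2 (k.*2.+2) (y - 1).
rewrite (factS k.*2.+3) (factS k.*2.+2).
have := fact_gt0 k.*2.+2.
move: (k.*2.+2)`! => F0n F0n_pos.
rewrite !natrM.
set F := F0n%:R.
have F0 : F != 0 by rewrite /F pnatr_eq0 -lt0n.
have : ff k.*2.+4 (y + 1) = 2 * ff k.*2.+4 y - ff k.*2.+4 (y - 1) + k.*2.+4%:R * k.*2.+3%:R * ff k.*2.+2 (y - 1) by rewrite -A; ring.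
move=> ->.
have : ff k.*2.+4 (y - 1 + 1) = 2 * ff k.*2.+4 (y - 1) - ff k.*2.+4 (y - 1 - 1) + k.*2.+4%:R * k.*2.+3%:R * ff k.*2.+2 (y - 1 - 1) by rewrite -B; ring.
move=> ->.
field.
have h := ler0n rat k.*2.
apply/and3P; split; [exact F0 | rewrite gt_eqF //; lra | rewrite gt_eqF //; lra].
Qed.

Lemma pi_van k (a : nat) : (a <= k.+1)%N -> pi k.+1 a%:R = 0.
Proof.
move=> ha; rewrite /pi -!natrD !ff_zero ?addr0 ?mul0r //.
all: rewrite doubleS -addnn; lia.
Qed.

Lemma pi_m1 k : pi k.+1 (-1) = 0.
Proof.
have e1 : -1 + k.+2%:R = k.+1%:R :> rat by rewrite (natS' k.+1); ring.
have e2 : -1 + k.+1%:R = k%:R :> rat by rewrite (natS' k); ring.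
rewrite /pi e1 e2 !ff_zero ?addr0 ?mul0r // doubleS -addnn.
all: lia.
Qed.

Lemma pi_mul k x :
  x ^+ 2 * pi k x = ((k.*2.+3 * k.*2.+4)%N)%:R * pi k.+1 x + ((k.+1 ^ 2)%N)%:R * pi k x.
Proof.
rewrite /pi doubleS.
set U := ff k.*2.+2 (x + k.+1%:R).
set V := ff k.*2.+2 (x + k%:R).
have eA : x + k.+2%:R - 1 = x + k.+1%:R by rewrite (natS' k.+1); ring.
have eB : x + k.+1%:R - 1 = x + k%:R by rewrite (natS' k); ring.
have hA : ff k.*2.+4 (x + k.+2%:R) = (x + k.+2%:R) * (U * (x + k.+1%:R - k.*2.+2%:R)).
  by rewrite ffS eA ffSr.
have hB : ff k.*2.+4 (x + k.+1%:R) = (x + k.+1%:R) * (V * (x + k%:R - k.*2.+2%:R)).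
  by rewrite ffS eB ffSr.
have hR : U * (x + k.+1%:R - k.*2.+2%:R) = (x + k.+1%:R) * V.
  by rewrite -ffSr ffS eB.
have core : (x ^+ 2 - k.+1%:R ^+ 2) * (U + V) =
   (x + k.+2%:R) * (U * (x + k.+1%:R - k.*2.+2%:R)) + (x + k.+1%:R) * (V * (x + k%:R - k.*2.+2%:R)).
  have -> : (x ^+ 2 - k.+1%:R ^+ 2) * (U + V) =
     (x + k.+1%:R) * (U * (x + k.+1%:R - k.*2.+2%:R)) + (x ^+ 2 - k.+1%:R ^+ 2) * V.
    rewrite !natS' -addnn natrD; ring.
  rewrite hR !natS' -addnn natrD; ring.
rewrite hA hB -core (factS k.*2.+3) (factS k.*2.+2).
have := fact_gt0 k.*2.+2.
move: (k.*2.+2)`! => F0n F0n_pos.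
have F0 : F0n%:R != 0 :> rat by rewrite pnatr_eq0 -lt0n.
move: F0; set F := F0n%:R => F0.
rewrite !natrM !natS' -addnn natrD.
have h := ler0n rat k.
field.
apply/and3P; split; [exact F0 | rewrite gt_eqF //; lra | rewrite gt_eqF //; lra].
Qed.

Lemma alt_step (g : nat -> rat) M m :
  \sum_(i < m.+2) (-1) ^+ i * ('C(M.+1, i))%:R * g i =
  \sum_(i < m.+1) (-1) ^+ i * ('C(M, i))%:R * (g i - g i.+1)
  + (-1) ^+ m.+1 * ('C(M, m.+1))%:R * g m.+1.
Proof.
elim: m => [|m IH].
  rewrite !big_ord_recr !big_ord0 /= !add0r !bin1 !bin0 expr1 expr0 !mul1r.
  rewrite -(natr1 (R:=rat) M); ring.
rewrite big_ord_recr /= IH [in RHS]big_ord_recr /= binS natrD !exprS; ring.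
Qed.

Definition Sg (n : nat) (f : rat -> rat) : rat :=
  \sum_(i < n.+2) (-1) ^+ i * ('C((2 * n).+1, i))%:R * f (n.+1%:R - i%:R).

Lemma Sg_ext n f g : (forall x, f x = g x) -> Sg n f = Sg n g.
Proof. by move=> H; apply: eq_bigr => i _; rewrite H. Qed.

Lemma alt_sum M m : \sum_(i < m.+2) (-1) ^+ i * ('C(M.+1, i))%:R = (-1) ^+ m.+1 * ('C(M, m.+1))%:R :> rat.
Proof.
have := alt_step (fun _ => 1) M m.
rewrite [X in _ = X + _]big1 => [|i _]; last by rewrite subrr mulr0.
by rewrite add0r mulr1 => <-; apply: eq_bigr => i _; rewrite mulr1.
Qed.

Lemma Sg_shift n f :
  Sg n.+1 f = Sg n (fun x => f (x + 1) - 2 * f x + f (x - 1))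
    + (-1) ^+ n * (('C((2 * n).+1, n.+2))%:R * f 0 + ('C((2 * n).+1, n.+1))%:R * f (-1)).
Proof.
rewrite /Sg.
have -> : (2 * n.+1).+1 = ((2 * n).+1).+2 by rewrite mulnS.
set g := fun i : nat => f (n.+2%:R - i%:R).
have -> : \sum_(i < n.+3) (-1) ^+ i * ('C((2 * n).+3, i))%:R * f (n.+2%:R - i%:R)
   = \sum_(i < n.+3) (-1) ^+ i * ('C((2 * n).+3, i))%:R * g i by [].
rewrite alt_step.
set h := fun i : nat => g i - g i.+1.
have -> : \sum_(i < n.+2) (-1) ^+ i * ('C((2 * n).+2, i))%:R * (g i - g i.+1)
   = \sum_(i < n.+2) (-1) ^+ i * ('C((2 * n).+2, i))%:R * h i by [].
rewrite alt_step.
have -> : \sum_(i < n.+2) (-1) ^+ i * ('C((2 * n).+1, i))%:R *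
      (f (n.+1%:R - i%:R + 1) - 2 * f (n.+1%:R - i%:R) + f (n.+1%:R - i%:R - 1))
   = \sum_(i < n.+2) (-1) ^+ i * ('C((2 * n).+1, i))%:R * (h i - h i.+1).
  apply: eq_bigr => i _; rewrite /h /g; congr (_ * _).
  have e1 : n.+2%:R - i%:R = n.+1%:R - i%:R + 1 :> rat by rewrite (natS' n.+1); ring.
  have e2 : n.+2%:R - i.+1%:R = n.+1%:R - i%:R :> rat by rewrite (natS' n.+1) (natS' i); ring.
  have e3 : n.+2%:R - i.+2%:R = n.+1%:R - i%:R - 1 :> rat by rewrite (natS' n.+1) (natS' i.+1) (natS' i); ring.
  rewrite e1 e2 e3; ring.
rewrite [in RHS]big_ord_recr /=.
have eg2 : g n.+2 = f 0 by rewrite /g subrr.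
have eg3 : g n.+3 = f (-1) by rewrite /g (natS' n.+2); congr f; ring.
rewrite /h eg2 eg3 (binS (2 * n).+1 n.+1) natrD !exprS; ring.
Qed.

Definition eqN (N : nat) (p q : {poly rat}) := forall i, (i <= N)%N -> p`_i = q`_i.

Lemma eqN_mulr N p p' q : eqN N p p' -> eqN N (p * q) (p' * q).
Proof.
move=> H i hi; rewrite !coefM; apply: eq_bigr => j _; rewrite H //.
have := ltn_ord j; lia.
Qed.

Lemma eqN_le N M p q : (M <= N)%N -> eqN N p q -> eqN M p q.
Proof. by move=> hMN H i hi; apply: H; exact: leq_trans hi hMN. Qed.

Lemma eqN_deriv N p q : eqN N.+1 p q -> eqN N p^`() q^`().
Proof. by move=> H i hi; rewrite !coef_deriv H. Qed.

Lemma rec_aux (r : nat -> rat) m (H : 4 * (r m.+1 * m.+1%:R) + r m.+2 * m.+2%:R = r m.+1 * 2) :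
  m.+2%:R * r m.+2 = (2 - 4 * m.+1%:R) * r m.+1.
Proof.
set a := r m.+1 in H *. set b := r m.+2 in H *.
rewrite -[m.+2%:R]natr1 -[m.+1%:R]natr1 in H *.
set x := m%:R in H *.
have -> : (x + 1 + 1) * b = a * 2 - 4 * (a * (x + 1)) by rewrite -H; ring.
ring.
Qed.

Lemma r_rec (r : fps) : is_sqrt_1_4z r -> forall m, m.+1%:R * r m.+1 = (2 - 4 * m%:R) * r m.
Proof.
move=> [r0 hr] M.
pose P := \poly_(i < M.+2) r i.
have hP : forall i, (i <= M.+1)%N -> P`_i = r i by move=> i hi; rewrite coef_poly ltnS hi.
pose Q : {poly rat} := 4%:P * 'X + 1%:P.
have hQ : forall i, Q`_i = one_plus_4z i.
  move=> [|[|i]]; rewrite /Q coefD coefC coefMX coefC /=; by rewrite ?add0r ?addr0.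
have PP : eqN M.+1 (P * P) Q.
  move=> i hi; rewrite coefM hQ -hr /fps_mul; apply: eq_bigr => j _.
  have hj := ltn_ord j; rewrite !hP //; lia.
have T1 : eqN M (P * P^`()) 2%:P.
  move=> i hi; have := @eqN_deriv _ _ _ PP i hi.
  rewrite derivM (mulrC (P^`())) -mulr2n /Q derivMXaddC derivC mul0r addr0.
  rewrite coefMn !coefC; case: (i == 0%N) => H.
    by apply: (@mulIf _ 2) => //; rewrite mulr_natr H mulrDl !mul1r.
  by move: H; rewrite -mulr_natr => /eqP; rewrite mulf_eq0 pnatr_eq0 orbF => /eqP.
have T2 : eqN M (Q * P^`()) (P * 2%:P).
  move=> i hi.
  have -> : P * 2%:P = 2%:P * P by rewrite mulrC.
  rewrite -(@eqN_mulr _ _ _ P T1 i hi) -mulrA (mulrC P^`()) mulrA.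
  apply: (@eqN_mulr M Q (P * P) P^`()) hi => j hj; rewrite PP //; exact: leqW.
have := T2 M (leqnn M).
rewrite coefMC hP // /Q mulrDl mul1r coefD -mulrA coefCM coefXM !coef_deriv !hP //; last by rewrite ltnS leq_pred.
case: M {T1 T2 hP PP P} => [|m] /= H.
  rewrite mulr1n mulr0 add0r in H; rewrite H mul1r mulr0 subr0 mulrC //.
by apply: (rec_aux r m); move: H; rewrite !mulr_natr.
Qed.

Definition cat (n : nat) : rat := ('C((2 * n).+1, n.+1))%:R - 2 * ('C(2 * n, n.+1))%:R.

Lemma cat_rec m : m.+2%:R * cat m.+1 = (4 * m%:R + 2) * cat m.
Proof.
rewrite /cat.
have e2 : (2 * m.+1 = (2 * m).+2)%N by rewrite mulnS.
rewrite e2 (binS (2 * m).+2 m.+1) (binS (2 * m) m).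
have hZ : 'C((2 * m).+2, m.+1) = (('C(2 * m, m.+1) + 'C(2 * m, m)) * 2)%N.
  rewrite (binS (2 * m).+1 m) -(bin_sub (n := (2 * m).+1) (m := m)); last by lia.
  have -> : ((2 * m).+1 - m = m.+1)%N by lia.
  rewrite (binS (2 * m) m); lia.
have F2 := mul_bin_left (2 * m) m.
have F5 := mul_bin_left (2 * m).+2 m.+1.
rewrite (_ : ((2 * m) - m = m)%N) in F2; last by lia.
rewrite (_ : ((2 * m).+2 - m.+1 = m.+1)%N) in F5; last by lia.
move: F2 F5; rewrite hZ.
move: ('C(2 * m, m.+1)) ('C(2 * m, m)) ('C((2 * m).+2, m.+2)) => Y X W.
move=> /(congr1 (fun n : nat => n%:R : rat)) F2 /(congr1 (fun n : nat => n%:R : rat)) F5.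
rewrite !natrM !natrD in F2 F5 *.
have h := ler0n rat m.
have hY : Y%:R = m%:R * X%:R / m.+1%:R :> rat by rewrite -F2; field; rewrite gt_eqF //; lra.
have hW : W%:R = m.+1%:R * ((Y%:R + X%:R) * 2) / m.+2%:R :> rat by rewrite -F5; field; rewrite gt_eqF //; lra.
rewrite !natrM !natrD hW hY -!natr1.
field.
apply/andP; split; rewrite gt_eqF //; lra.
Qed.

Lemma r_closed (r : fps) : is_sqrt_1_4z r -> forall m, r m.+1 = 2 * (-1) ^+ m * cat m.
Proof.
move=> hr; have rec := @r_rec r hr; have r0 := hr.1.
elim=> [|m IH].
  have := rec 0%N; rewrite mul1r mulr0 subr0 r0 => ->.
  by rewrite /cat muln0 bin1 bin0n expr0 /= mulr0 subr0 !mulr1.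
apply: (@mulfI _ (m.+2%:R)); first by rewrite pnatr_eq0.
rewrite rec IH exprS.
have -> : m.+2%:R * (2 * (-1 * (-1) ^+ m) * cat m.+1) = - (2 * (-1) ^+ m) * (m.+2%:R * cat m.+1) by ring.
rewrite cat_rec -natr1; ring.
Qed.

Lemma pi_at0 k : pi k.+1 0 = 0.
Proof. exact: (@pi_van k 0 isT). Qed.

Lemma pi_at1 k : pi k.+1 1 = 0.
Proof. exact: (@pi_van k 1 isT). Qed.

Lemma Sg0 f : Sg 0 f = f 1 - f 0.
Proof.
rewrite /Sg !big_ord_recr big_ord0 /= add0r expr0 expr1 muln0 bin0 bin1 subr0 subrr !mul1r mulN1r.
ring.
Qed.

Definition cc (r : fps) (m : nat) : rat := 2^-1 * fps_add (fps_const 1) r m.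

Lemma Sg_pi0 (r : fps) : is_sqrt_1_4z r -> forall n, Sg n (pi 0) = cc r n.
Proof.
move=> hr [|n].
  rewrite Sg0 !pi0 /cc /fps_add /fps_const hr.1 expr1n expr0n /= subr0.
  by rewrite -[1 + 1]/(2 : rat) mulVf.
rewrite Sg_shift.
rewrite (@Sg_ext n _ (fun _ => 2)); last by move=> x; rewrite !pi0; ring.
rewrite /Sg -big_distrl /= alt_sum !pi0 expr0n /= mulr0 add0r.
rewrite /cc /fps_add /fps_const add0r (@r_closed r hr) /cat.
have -> : (-1) ^+ 2 = 1 :> rat by rewrite sqrrN expr1n.
rewrite exprS; by field.
Qed.

Lemma Sg_pi (r : fps) : is_sqrt_1_4z r ->
  forall n k, Sg n (pi k) = if (k <= n)%N then cc r (n - k) else 0.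
Proof.
move=> hr; elim=> [|n IH] [|k].
- by rewrite (@Sg_pi0 r hr).
- by rewrite Sg0 pi_at1 pi_at0 subrr.
- by rewrite (@Sg_pi0 r hr).
- rewrite Sg_shift (@Sg_ext n _ (pi k)); last by move=> x; rewrite pi_d2.
  by rewrite IH pi_at0 pi_m1 ltnS subSS !mulr0 !addr0 ?mulr0 ?addr0.
Qed.

Lemma natzR (n : nat) : (n%:Z)%:~R = n%:R :> rat.
Proof. by []. Qed.

Lemma expand s : (0 < s)%N -> exists b : nat -> int,
  [/\ b 0%N = 1, (forall k, (0 < k)%N -> (3 %| b k)%Z), (forall k, (s <= k)%N -> b k = 0) &
   forall x : rat, x ^+ (2 * s) = \sum_(k < s) (b k)%:~R * pi k x].
Proof.
case: s => // s _; elim: s => [|s [b [b0 b3 bs bx]]].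
  exists (fun k => if k is 0%N then 1 else 0); split => //.
  - by case.
  - by case.
  - by move=> x; rewrite big_ord1 pi0 muln1 mulr1z mul1r.
exists (fun k => if k is k'.+1 then (k'.+2 ^ 2)%N%:Z * b k'.+1 + (k'.*2.+3 * k'.*2.+4)%N%:Z * b k' else 1).
split => //.
- case=> // [[|k]] _.
    apply: rpredD; first by apply: dvdz_mull; apply: b3.
    by apply: dvdz_mulr.
  by apply: rpredD; apply: dvdz_mull; apply: b3.
- case=> // k hk; rewrite !bs ?mulr0 ?addr0 //; lia.
move=> x.
rewrite (_ : (2 * s.+2 = 2 + 2 * s.+1)%N); last by lia.
rewrite exprD bx mulr_sumr.
under eq_bigr => k _ do rewrite mulrCA pi_mul mulrDr.
rewrite big_split /=.
rewrite [in RHS]big_ord_recl /= mul1r pi0.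
rewrite [X in _ + X = _](_ : _ = \sum_(k < s.+2) (b k)%:~R * (((k.+1 ^ 2)%N)%:R * pi k x)); last first.
  by rewrite [in RHS]big_ord_recr /= bs // mul0r addr0.
rewrite [X in _ + X = _]big_ord_recl /= b0 addrCA; congr (_ + _).
  by rewrite pi0 mulr1z exp1n mul1r mul1r.
rewrite -big_split /=; apply: eq_bigr => k _.
rewrite /bump /= !add1n intrD !intrM !natzR; ring.
Qed.

Lemma lhs_Sg s n : lhs_series s n = Sg n (fun x => x ^+ (2 * s)).
Proof.
rewrite /lhs_series /Sg (reindex_inj rev_ord_inj) /=; apply: eq_bigr => i _.
have hi : (i <= n.+1)%N by rewrite -ltnS.
by rewrite subSS subKn // natrB // addn1.
Qed.

Lemma Sg_lin n s (b : nat -> int) :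
  Sg n (fun x => \sum_(k < s) (b k)%:~R * pi k x) = \sum_(k < s) (b k)%:~R * Sg n (pi k).
Proof.
rewrite /Sg; under eq_bigr do rewrite mulr_sumr.
rewrite exchange_big; apply: eq_bigr => k _; rewrite mulr_sumr; apply: eq_bigr => i _.
by rewrite mulrCA.
Qed.

Theorem proposition18p3 (s : nat) (hs : (0 < s)%N) :
  exists p : {poly int},
    (forall i : nat, (3 %| p`_i)%Z) /\ p.[0] = 0 /\
    forall r : fps, is_sqrt_1_4z r ->
      forall n : nat,
        lhs_series s n =
        fps_mul (fun k => 2^-1 * fps_add (fps_const 1) r k)
                (fps_add (fps_const 1) (fps_of_poly p)) n.
Proof.
have [b [b0 b3 bs bx]] := @expand s hs.
pose p : {poly int} := \poly_(i < s) (if i is 0%N then 0 else b i).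
have hq : forall k, fps_add (fps_const 1) (fps_of_poly p) k = (b k)%:~R.
  move=> k; rewrite /fps_add /fps_const /fps_of_poly /p coef_poly.
  case: k => [|k]; first by rewrite hs b0 /= mulr0z addr0.
  case: ltnP => hk; last rewrite bs //; ring.
exists p; split.
  move=> i; rewrite /p coef_poly; case: (i < s)%N; last exact: dvdz0.
  case: i => [|i]; [exact: dvdz0 | exact: b3].
split; first by rewrite horner_coef0 /p coef_poly hs.
move=> r hr n.
rewrite lhs_Sg (@Sg_ext n _ (fun x => \sum_(k < s) (b k)%:~R * pi k x)) //.
rewrite Sg_lin.
under eq_bigr => k _ do rewrite (@Sg_pi r hr).
rewrite /fps_mul [RHS](reindex_inj rev_ord_inj) /=.
rewrite [RHS](eq_bigr (fun i : 'I_n.+1 => cc r (n - i) * (b i)%:~R)); last by move=> i _; rewrite subSS subKn ?leq_ord // hq.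
rewrite (big_ord_widen (n.+1 + s) (fun k : nat => (b k)%:~R * (if (k <= n)%N then cc r (n - k) else 0))) ?leq_addl //.
rewrite (big_ord_widen (n.+1 + s) (fun k : nat => cc r (n - k) * (b k)%:~R)) ?leq_addr //.
rewrite big_mkcond [RHS]big_mkcond /=; apply: eq_bigr => k _.
case: (ltnP k s) => hks; case: (ltnP k n.+1) => hkn.
- by rewrite -ltnS hkn mulrC.
- by rewrite leqNgt hkn mulr0.
- by rewrite bs // mulr0z mulr0.
- by [].
Qed.
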